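(* Let $u\le v$ in Bruhat order on $S_m$ and $1\le i\le m$. Then: (1) $w\mapsto\epsilon_i(w)$ is a poset isomorphism from the Bruhat interval $[u,v]$ onto $[\epsilon_i(u),\epsilon_i(v)]$; (2) $[\epsilon_i(u),\epsilon_{i+1}(v)]=[\epsilon_i(u),\epsilon_i(v)]\sqcup[\epsilon_{i+1}(u),\epsilon_{i+1}(v)]$, and for $w,w'\in[u,v]$ and $j,k\in\{i,i+1\}$ we have $\epsilon_j(w)\le\epsilon_k(w')$ if and only if $w\le w'$ and $j\le k$.
   Context: For $w\in S_m$ and $1\le i\le m+1$, $\epsilon_i(w)\in S_{m+1}$ is defined by $\epsilon_i(w)(j)=w(j)+1$ for $j<i$, $\epsilon_i(w)(i)=1$, $\epsilon_i(w)(j)=w(j-1)+1$ for $j>i$. Bruhat intervals $[a,b]=\{w: a\le w\le b\}$ in Bruhat order. *)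

(* Defs.v *)
From mathcomp Require Import all_boot all_fingroup.
Set Implicit Arguments. Unset Strict Implicit. Unset Printing Implicit Defensive.
Local Open Scope group_scope.

(* Permutations of {1..m} are modelled as 'S_m (permutations of 'I_m = {0..m-1}). *)

Definition ninv (m : nat) (w : 'S_m) : nat :=
  #|[set p : 'I_m * 'I_m | (p.1 < p.2)%N && (w p.2 < w p.1)%N]|.

Definition bruhat_step (m : nat) : rel 'S_m :=
  fun x y => [exists i : 'I_m, exists j : 'I_m,
                [&& (i < j)%N, y == x * tperm i j & (ninv x < ninv y)%N]].

Definition bruhat_le (m : nat) : rel 'S_m := connect (@bruhat_step m).

Definition bruhat_interval (m : nat) (a b : 'S_m) : {set 'S_m} :=
  [set w | bruhat_le a w && bruhat_le w b].

(* epsilon_i (0-based position i : 'I_m.+1): inserts the value 1 (here 0) at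
   position i and shifts all values of w up by one.  lift_perm i ord0 w maps
   i to ord0 and lift i k to lift ord0 (w k). *)
Definition eps (m : nat) (i : 'I_m.+1) (w : 'S_m) : 'S_m.+1 :=
  lift_perm i ord0 w.

(* 0-based position i (= 1-based i+1) and i+1 in 'I_m.+1, for i : 'I_m. *)
Definition posI (m : nat) (i : 'I_m) : 'I_m.+1 := widen_ord (leqnSn m) i.
Definition posI1 (m : nat) (i : 'I_m) : 'I_m.+1 := lift ord0 i.

(* Main.v *)
Require Import Defs.
From mathcomp Require Import all_boot all_fingroup.
From mathcomp Require Import zify.
Set Implicit Arguments. Unset Strict Implicit. Unset Printing Implicit Defensive.
Local Open Scope group_scope.

Lemma ninvE n (w : 'S_n) :
  ninv w = \sum_(r : 'I_n) \sum_(s : 'I_n) ((r < s) && (w s < w r))%N.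
Proof.
rewrite /ninv -sum1dep_card big_mkcond /=.
rewrite -(pair_big predT predT (fun r s : 'I_n => nat_of_bool ((r < s) && (w s < w r))%N)) /=.
done.
Qed.

Lemma sum_delta n (p q : 'I_n) :
  \sum_(r : 'I_n) \sum_(s : 'I_n) ((r == q) && (s == p)) = 1%N.
Proof.
rewrite (bigD1 q) //= [X in _ + X]big1 ?addn0; last first.
  by move=> r /negbTE Hr; rewrite big1 // => s _; rewrite Hr.
rewrite (bigD1 p) //= [X in _ + X]big1 ?eqxx //.
by move=> s /negbTE ->; rewrite andbF.
Qed.

Lemma ninv_adj n (w : 'S_n) (p q : 'I_n) :
  val q = (val p).+1 -> (w p < w q)%N ->
  ninv (tperm p q * w) = (ninv w).+1.
Proof.
move=> Hq Hw.
rewrite !ninvE.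
rewrite (reindex_inj (@perm_inj _ (tperm p q))) /=.
transitivity (\sum_(r : 'I_n) \sum_(s : 'I_n)
   (((r < s) && (w s < w r))%N + ((r == q) && (s == p)))).
  apply: eq_bigr => r _.
  rewrite (reindex_inj (@perm_inj _ (tperm p q))) /=.
  apply: eq_bigr => s _.
  rewrite !permM !tpermK.
  have Hpq : (p != q) by apply/eqP => E; move: Hq; rewrite E; lia.
  have Hq' : (q:nat) = (p:nat).+1 by [].
  have Hw' : (w q < w p)%N = false by apply/negbTE; rewrite -leqNgt ltnW.
  case: (tpermP p q r) => [->|->|Hrp Hrq];
  case: (tpermP p q s) => [->|->|Hsp Hsq];
  rewrite ?eqxx ?(negbTE Hpq) ?(eq_sym q p) ?(negbTE Hpq) ?andbF ?andFb ?ltnn /=;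
  try (rewrite ?(introF eqP Hrp) ?(introF eqP Hrq) ?(introF eqP Hsp) ?(introF eqP Hsq) /=);
  rewrite ?addn0 ?addn1 ?Hw' ?andbF //;
  try (have Hrp' : (r:nat) <> p by move=> E; apply: Hrp; apply: val_inj);
  try (have Hrq' : (r:nat) <> q by move=> E; apply: Hrq; apply: val_inj);
  try (have Hsp' : (s:nat) <> p by move=> E; apply: Hsp; apply: val_inj);
  try (have Hsq' : (s:nat) <> q by move=> E; apply: Hsq; apply: val_inj);
  try (congr (nat_of_bool (_ && _)); apply/idP/idP; lia);
  try (rewrite Hw andbT; congr (nat_of_bool _); lia);
    rewrite Hw !andbT; have -> : (q < p)%N = false by lia.
  by have -> : (p < q)%N by lia.



apply: etrans; first (apply: eq_bigr => r _; exact: big_split).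
by rewrite big_split /= sum_delta addn1.

Qed.


Lemma ninv_adj2 n (w : 'S_n) (p q : 'I_n) :
  val q = (val p).+1 -> (w q < w p)%N ->
  ninv w = (ninv (tperm p q * w)).+1.
Proof.
move=> Hq Hw; rewrite -[in LHS](tpermKg p q w) ninv_adj //.
by rewrite !permM tpermL tpermR.
Qed.

Lemma swap0_pos n (z : 'S_n.+1) k : forall (p q : 'I_n.+1),
  val q = (val p + k.+1)%N -> z p = ord0 -> (ninv z < ninv (tperm p q * z))%N.
Proof.
elim: k z => [|k IH] z p q Hq Hz.
  have Hq' : (q:nat) = (p + 1)%N := Hq.
  have Hw : (z p < z q)%N.
    have : z q != z p by rewrite (inj_eq perm_inj); apply/eqP => E; move: Hq; rewrite E; lia.
    by rewrite Hz lt0n.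
  rewrite ninv_adj //; lia.
have Hq' : (q:nat) = (p + k.+2)%N := Hq.
have Hp1 : ((p:nat).+1 < n.+1)%N by have := ltn_ord q; lia.
pose p1 : 'I_n.+1 := Ordinal Hp1.
pose z1 := tperm p p1 * z.
have E1 : ninv z1 = (ninv z).+1.
  have Hw : (z p < z p1)%N.
    have : z p1 != z p by rewrite (inj_eq perm_inj); apply/eqP => E; move: (congr1 (@nat_of_ord _) E) => /=; lia.
    by rewrite Hz lt0n.
  by rewrite ninv_adj.
have Hz1 : z1 p1 = ord0 by rewrite permM tpermR.
have := IH z1 p1 q; rewrite /= Hz1 => /(_ _ erefl) H.
have {H} H : (ninv z1 < ninv (tperm p1 q * z1))%N by apply: H; lia.
set R := tperm p1 q * z1 in H.
have ET : tperm p q * z = tperm p p1 * R.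
  have Hpq : p1 != q by apply/eqP => E; move: (congr1 (@nat_of_ord _) E) => /=; lia.
  have Hpq' : p != q by apply/eqP => E; move: (congr1 (@nat_of_ord _) E) => /=; lia.
  have := tpermJ_tperm Hpq Hpq'.
  rewrite conjgE tpermV => <-.
  by rewrite /R /z1 !mulgA tpermC.
rewrite ET.
have Hne : R p != R p1.
  by rewrite (inj_eq perm_inj); apply/eqP => E; move: (congr1 (@nat_of_ord _) E) => /=; lia.
case: (ltngtP (R p) (R p1)) => HR.
- rewrite ninv_adj //; lia.
- move: (ninv_adj2 (erefl (val p1)) HR). lia.
- by case/eqP: Hne; apply: val_inj.
Qed.


Lemma conj_tperm n (z : 'S_n) p q : z * tperm (z p) (z q) = tperm p q * z.
Proof. by rewrite -tpermJ conjgE mulKVg. Qed.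

Lemma swap0 n (z : 'S_n.+1) d :
  (z^-1 ord0 < z^-1 d)%N -> (ninv z < ninv (z * tperm ord0 d))%N.
Proof.
move=> H.
have -> : z * tperm ord0 d = tperm (z^-1 ord0) (z^-1 d) * z.
  by rewrite -conj_tperm !permKV.
apply: (@swap0_pos _ _ ((z^-1 d) - (z^-1 ord0)).-1).
  have : (nat_of_ord (z^-1 d) = z^-1 ord0 + ((z^-1 d) - (z^-1 ord0)).-1.+1)%N by lia.
  exact.
by rewrite permKV.
Qed.

Definition pos0 n (z : 'S_n.+1) := z^-1 ord0.

Lemma pos0M n (z : 'S_n.+1) c d : pos0 (z * tperm c d) = z^-1 (tperm c d ord0).
Proof. by rewrite /pos0 invMg tpermV permM. Qed.

Lemma tpermKr n (z : 'S_n) c d : z * tperm c d * tperm c d = z.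
Proof. by apply/permP => x; rewrite !permM tpermK. Qed.

Lemma step_pos0 n (x y : 'S_n.+1) : bruhat_step x y -> (pos0 x <= pos0 y)%N.
Proof.
case/existsP => c /existsP [d /and3P [Hcd /eqP -> Hn]].
rewrite pos0M.
case: (tpermP c d ord0) => [Hc | Hd | _ _].
- rewrite leqNgt; apply/negP => H.
  have := @swap0 _ (x * tperm c d) d.
  rewrite -Hc tpermKr.
  have -> : (x * tperm ord0 d)^-1 ord0 = x^-1 d by rewrite invMg tpermV permM tpermL.
  have -> : (x * tperm ord0 d)^-1 d = x^-1 ord0 by rewrite invMg tpermV permM tpermR.
  move=> /(_ H); rewrite -Hc in Hn; lia.
- by move: Hcd; rewrite -Hd.
- by [].
Qed.

Lemma le_pos0 n (x y : 'S_n.+1) : bruhat_le x y -> (pos0 x <= pos0 y)%N.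
Proof.
case/connectP => s; elim: s x => [|z s IH] x /=; first by move=> _ ->.
case/andP => H1 Hp Hl; exact: leq_trans (step_pos0 H1) (IH _ Hp Hl).
Qed.

Lemma eps_id m (p : 'I_m.+1) w : eps p w p = ord0.
Proof. exact: lift_perm_id. Qed.

Lemma eps_lift m (p : 'I_m.+1) w k : eps p w (lift p k) = lift ord0 (w k).
Proof. exact: lift_perm_lift. Qed.

Lemma pos0_eps m (p : 'I_m.+1) w : pos0 (eps p w) = p.
Proof. by rewrite /pos0 /eps lift_permV lift_perm_id. Qed.

Lemma eps_inj m (p : 'I_m.+1) : injective (@eps m p).
Proof.
move=> w w' E; apply/permP => k; apply: (@lift_inj _ ord0).
by rewrite -(eps_lift p w) -(eps_lift p w') E.
Qed.

Lemma eps_surj m (p : 'I_m.+1) (z : 'S_m.+1) : pos0 z = p -> exists w, z = eps p w.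
Proof.
move=> Hp.
have Hzp : z p = ord0 by rewrite -Hp permKV.
pose f (k : 'I_m) := odflt k (unlift ord0 (z (lift p k))).
have Hf : forall k, lift ord0 (f k) = z (lift p k).
  move=> k; rewrite /f; case: unliftP => [u -> // | E].
  exfalso; move: E; rewrite -Hzp => /perm_inj /eqP; by rewrite lift_eqF.
have finj : injective f.
  by move=> k k' E; apply: (@lift_inj _ p); apply: (@perm_inj _ z); rewrite -!Hf E.
exists (perm finj); apply/permP => x.
case: (unliftP p x) => [k -> | ->]; last by rewrite eps_id.
by rewrite eps_lift permE Hf.
Qed.

Lemma lift_tperm n (a b x : 'I_n) :
  lift ord0 (tperm a b x) = tperm (lift ord0 a) (lift ord0 b) (lift ord0 x).
Proof.
case: (tpermP a b x) => [->|->|Ha Hb]; rewrite ?tpermL ?tpermR // tpermD //.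
- by rewrite (inj_eq lift_inj) eq_sym; apply/eqP.
- by rewrite (inj_eq lift_inj) eq_sym; apply/eqP.
Qed.

Lemma eps_tperm m (p : 'I_m.+1) x a b :
  eps p (x * tperm a b) = eps p x * tperm (lift ord0 a) (lift ord0 b).
Proof.
apply/permP => y; rewrite permM.
case: (unliftP p y) => [k -> | ->].
  by rewrite !eps_lift permM lift_tperm.
by rewrite !eps_id tpermD // eq_liftF.
Qed.

Lemma lift_lt n (p : 'I_n.+1) (i j : 'I_n) : (lift p i < lift p j)%N = (i < j)%N.
Proof. rewrite /= /bump; case: (leqP p i); case: (leqP p j) => *; apply/idP/idP; lia. Qed.

Lemma lift_ltp n (p : 'I_n.+1) (i : 'I_n) : (lift p i < p)%N = (i < p)%N.
Proof. rewrite /= /bump; case: (leqP p i) => *; apply/idP/idP; lia. Qed.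

Lemma sum_ltk m k : (k <= m)%N -> \sum_(i < m) (i < k)%N = k.
Proof.
elim: m k => [|m IH] k Hk; first by rewrite big_ord0; lia.
rewrite big_ord_recr /=.
case: (ltnP m k) => H.
  have Ek : k = m.+1 by lia.
  rewrite (eq_bigr (fun _ => 1%N)); last by move=> i _; rewrite Ek ltnS ltnW.
  by rewrite sum_nat_const card_ord muln1 addn1.
by rewrite IH // addn0.
Qed.

Lemma sum_lift m (p : 'I_m.+1) (F : 'I_m.+1 -> nat) :
  \sum_(i < m.+1) F i = (F p + \sum_(i < m) F (lift p i))%N.
Proof. exact: bigD1_ord. Qed.

Lemma ninv_eps m (p : 'I_m.+1) w : ninv (eps p w) = (ninv w + p)%N.
Proof.
rewrite !ninvE (sum_lift p).
rewrite big1 ?add0n; last by move=> s _; rewrite eps_id ltn0 andbF.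
transitivity (\sum_(i < m) ((i < p)%N + \sum_(s < m) ((i < s) && (w s < w i)))%N).
  apply: eq_bigr => i _; rewrite (sum_lift p) eps_id eps_lift lift_ltp lift0.
  have -> : (nat_of_ord (@ord0 m) < (w i).+1)%N = true by []. rewrite andbT.
  apply: congr1; apply: eq_bigr => j _.
  by rewrite !eps_lift lift_lt lift0 ltnS.
rewrite big_split (@sum_ltk m p); first exact: addnC.
by rewrite -ltnS.
Qed.




Lemma ord_antisym n (i j : 'I_n) : (i <= j)%N -> (j <= i)%N -> i = j.
Proof. by move=> H1 H2; apply/val_inj/eqP; rewrite eqn_leq H1 H2. Qed.

Lemma step_eps m (p : 'I_m.+1) x y : bruhat_step x y -> bruhat_step (eps p x) (eps p y).
Proof.
case/existsP => a /existsP [b /and3P [Hab /eqP -> Hn]].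
apply/existsP; exists (lift ord0 a); apply/existsP; exists (lift ord0 b).
by rewrite eps_tperm eqxx lift_lt Hab -eps_tperm !ninv_eps ltn_add2r.
Qed.

Lemma le_eps m (p : 'I_m.+1) x y : bruhat_le x y -> bruhat_le (eps p x) (eps p y).
Proof.
case/connectP => s; elim: s x => [|z s IH] x /=; first by move=> _ ->; exact: connect0.
case/andP => H1 Hp Hl; exact: connect_trans (connect1 (step_eps p H1)) (IH _ Hp Hl).
Qed.

Lemma step_eps_inv m (p : 'I_m.+1) x z :
  bruhat_step (eps p x) z -> pos0 z = p -> exists y, z = eps p y /\ bruhat_step x y.
Proof.
case/existsP => c /existsP [d /and3P [Hcd /eqP Ez Hn]] Hz.
case: (unliftP ord0 d) => [b Eb | Ed]; last by move: Hcd; rewrite Ed.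
case: (unliftP ord0 c) => [a Ea | Ec].
  rewrite Ea Eb -eps_tperm in Ez Hn; rewrite Ea Eb lift_lt in Hcd.
  exists (x * tperm a b); split; first by [].
  apply/existsP; exists a; apply/existsP; exists b.
  by rewrite eqxx Hcd /=; rewrite Ez !ninv_eps ltn_add2r in Hn.
exfalso; move: Hz; rewrite Ez pos0M -Ec tpermL => E.
have : (eps p x)^-1 d = (eps p x)^-1 ord0 by rewrite E -[RHS]/(pos0 _) pos0_eps.
move/perm_inj => Ed; move: Hcd; rewrite Ed -Ec; lia.
Qed.

Lemma le_eps_inv m (p : 'I_m.+1) x y : bruhat_le (eps p x) (eps p y) -> bruhat_le x y.
Proof.
case/connectP => s; elim: s x => [|z s IH] x /=.
  by move=> _ /eps_inj ->; exact: connect0.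
case/andP => H1 Hp Hl.
have Hle : bruhat_le z (eps p y) by apply/connectP; exists s.
have h1 := step_pos0 H1; have h2 := le_pos0 Hle.
rewrite pos0_eps in h1; rewrite pos0_eps in h2.
have Hz : pos0 z = p by exact: ord_antisym h2 h1.
have [y' [Ez Hs]] := step_eps_inv H1 Hz.
subst z; exact: connect_trans (connect1 Hs) (IH _ Hp Hl).
Qed.


Lemma ord_eqn n (i j : 'I_n) : (i : nat) = j -> i = j.
Proof. exact: val_inj. Qed.

Lemma val_posI m (i : 'I_m) : (posI i : nat) = i. Proof. by []. Qed.
Lemma val_posI1 m (i : 'I_m) : (posI1 i : nat) = i.+1. Proof. by []. Qed.

Lemma lift_val n (p : 'I_n.+1) (k : 'I_n) :
  (lift p k : nat) = if (p <= k)%N then k.+1 else k.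
Proof. by rewrite /= /bump; case: leqP. Qed.

Lemma eps_adj m (i : 'I_m) w :
  eps (posI1 i) w = eps (posI i) w * tperm ord0 (eps (posI i) w (posI1 i)).
Proof.
have E1 : posI1 i = lift (posI i) i by apply: ord_eqn; rewrite val_posI1 lift_val val_posI leqnn.
have E2 : posI i = lift (posI1 i) i.
  by apply: ord_eqn; rewrite val_posI lift_val val_posI1 ltnn.
apply/permP => x; rewrite permM.
case: (unliftP (posI i) x) => [k Ex | ->]; last first.
  by rewrite eps_id tpermL {1}E2 eps_lift E1 eps_lift.
case: (eqVneq k i) => [Ek | Hk].
  by rewrite Ex Ek -E1 eps_id tpermR.
have Ex' : x = lift (posI1 i) k.
  rewrite Ex; apply: ord_eqn; rewrite !lift_val ?val_posI ?val_posI1. have -> : (nat_of_ord (@ord0 m) <= i)%N by [].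
  have : @nat_of_ord m k <> i by move=> E; move/eqP: Hk; apply; apply: val_inj.
  case: ifP => [H1|/negbT H1]; case: ifP => [H2|/negbT H2]; rewrite -?ltnNge -?leqNgt in H1 H2; lia.
rewrite {2}Ex Ex' !eps_lift E1 eps_lift tpermD //.
by rewrite (inj_eq lift_inj) (inj_eq perm_inj) eq_sym.
Qed.

Lemma adj_step m (i : 'I_m) w : bruhat_step (eps (posI i) w) (eps (posI1 i) w).
Proof.
apply/existsP; exists ord0; apply/existsP; exists (eps (posI i) w (posI1 i)).
have E1 : posI1 i = lift (posI i) i by apply: ord_eqn; rewrite val_posI1 lift_val val_posI leqnn.
rewrite -eps_adj eqxx !ninv_eps val_posI val_posI1 addnS ltnSn andbT /=.
by rewrite E1 eps_lift lift0.
Qed.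

Lemma le_adj m (i : 'I_m) w : bruhat_le (eps (posI i) w) (eps (posI1 i) w).
Proof. exact: connect1 (adj_step i w). Qed.

Lemma step_move m (i : 'I_m) x z :
  bruhat_step (eps (posI i) x) z -> pos0 z = posI1 i -> z = eps (posI1 i) x.
Proof.
case/existsP => c /existsP [d /and3P [Hcd /eqP Ez Hn]] Hz.
have Hd : d != ord0 by apply/eqP => E; move: Hcd; rewrite E.
move: Hz; rewrite Ez pos0M.
case: (tpermP c d ord0) => [Hc | Hd' | _ _].
- move=> E; rewrite eps_adj -Hc; congr (_ * tperm _ _).
  by rewrite -E permKV.
- by move/eqP: Hd; rewrite Hd'.
- move=> E; have : posI i = posI1 i by rewrite -E -[LHS](pos0_eps (posI i) x).
  by move/(congr1 (@nat_of_ord _)); rewrite val_posI val_posI1; lia.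
Qed.

Lemma le_eps_adj_inv m (i : 'I_m) x y :
  bruhat_le (eps (posI i) x) (eps (posI1 i) y) -> bruhat_le x y.
Proof.
case/connectP => s; elim: s x => [|z s IH] x /=.
  move=> _ E; have := congr1 (@pos0 _) E; rewrite !pos0_eps.
  by move/(congr1 (@nat_of_ord _)); rewrite val_posI val_posI1; lia.
case/andP => H1 Hp Hl.
have Hle : bruhat_le z (eps (posI1 i) y) by apply/connectP; exists s.
have h1 := step_pos0 H1; have h2 := le_pos0 Hle.
rewrite pos0_eps in h1; rewrite pos0_eps in h2.
case: (eqVneq (pos0 z) (posI i)) => Hz.
  have [y' [Ez Hs]] := step_eps_inv H1 Hz.
  subst z; exact: connect_trans (connect1 Hs) (IH _ Hp Hl).
have Hz' : pos0 z = posI1 i.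
  apply: ord_eqn; rewrite val_posI1.
  have : (pos0 z : nat) <> i by move=> E; move/eqP: Hz; apply; apply: val_inj.
  move: h1 h2; rewrite val_posI val_posI1; lia.
have Ez := step_move H1 Hz'.
by rewrite Ez in Hle; apply: le_eps_inv Hle.
Qed.


Lemma eps_le_iff m (p : 'I_m.+1) x y : bruhat_le (eps p x) (eps p y) = bruhat_le x y.
Proof. by apply/idP/idP; [apply: le_eps_inv | apply: le_eps]. Qed.

Lemma mixed_iff m (i : 'I_m) x y :
  bruhat_le (eps (posI i) x) (eps (posI1 i) y) = bruhat_le x y.
Proof.
apply/idP/idP; first exact: le_eps_adj_inv.
by move=> H; apply: connect_trans (le_eps _ H) (le_adj i y).
Qed.

Lemma mixed_false m (i : 'I_m) x y :
  bruhat_le (eps (posI1 i) x) (eps (posI i) y) = false.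
Proof.
apply/negP => /le_pos0; rewrite !pos0_eps val_posI val_posI1; lia.
Qed.

Lemma interval_pos0 m (p : 'I_m.+1) u v z :
  z \in bruhat_interval (eps p u) (eps p v) -> pos0 z = p.
Proof.
rewrite inE => /andP [/le_pos0 h1 /le_pos0 h2].
rewrite pos0_eps in h1; rewrite pos0_eps in h2; exact: ord_antisym h2 h1.
Qed.

Unset Implicit Arguments.
Local Close Scope group_scope.

Theorem mainTheorem13 (m : nat) (u v : 'S_m) (i : 'I_m) :
  bruhat_le u v ->
  ([set eps (posI i) w | w in bruhat_interval u v]
     = bruhat_interval (eps (posI i) u) (eps (posI i) v)
   /\ {in bruhat_interval u v &, injective (eps (posI i))}
   /\ {in bruhat_interval u v &, forall w w',
         bruhat_le (eps (posI i) w) (eps (posI i) w') = bruhat_le w w'})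
  /\
  (bruhat_interval (eps (posI i) u) (eps (posI1 i) v)
     = bruhat_interval (eps (posI i) u) (eps (posI i) v)
       :|: bruhat_interval (eps (posI1 i) u) (eps (posI1 i) v)
   /\ [disjoint bruhat_interval (eps (posI i) u) (eps (posI i) v)
        & bruhat_interval (eps (posI1 i) u) (eps (posI1 i) v)]
   /\ {in bruhat_interval u v &, forall w w',
         forall j k : 'I_m.+1,
           j \in [:: posI i; posI1 i] -> k \in [:: posI i; posI1 i] ->
           bruhat_le (eps j w) (eps k w') = bruhat_le w w' && (j <= k)%N}).
Proof.
move=> _.
split; [split; [|split] | split; [|split]].
- apply/setP => z; apply/imsetP/idP.
    case=> w; rewrite !inE => /andP [H1 H2] ->.
    by rewrite !eps_le_iff H1 H2.
  move=> Hz; have [w Ew] := eps_surj (interval_pos0 Hz).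
  exists w => //; move: Hz; rewrite Ew !inE !eps_le_iff; done.
- by move=> w w' _ _; apply: eps_inj.
- by move=> w w' _ _; apply: eps_le_iff.
- apply/setP => z; rewrite !inE.
  apply/idP/idP.
    case/andP => H1 H2.
    have h1 := le_pos0 H1; have h2 := le_pos0 H2.
    rewrite pos0_eps in h1; rewrite pos0_eps in h2.
    case: (eqVneq (pos0 z) (posI i)) => Hz.
      have [w Ew] := eps_surj Hz; subst z.
      by rewrite mixed_iff in H2; rewrite H1 /= eps_le_iff H2.
    have Hz' : pos0 z = posI1 i.
      apply: ord_eqn; rewrite val_posI1.
      have : (pos0 z : nat) <> i by move=> E; move/eqP: Hz; apply; apply: ord_eqn.
      move: h1 h2; rewrite val_posI val_posI1; lia.
    have [w Ew] := eps_surj Hz'; subst z.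
    by rewrite mixed_iff in H1; rewrite H2 eps_le_iff H1 orbT.
  case/orP => /andP [H1 H2].
    by rewrite H1 /=; exact: connect_trans H2 (le_adj i v).
  by rewrite H2 andbT; exact: connect_trans (le_adj i u) H1.
- apply/pred0P => z /=; apply/negP => /andP [/interval_pos0 H1 /interval_pos0 H2].
  by move: (congr1 (@nat_of_ord _) (etrans (esym H1) H2)); rewrite val_posI val_posI1; lia.
- move=> w w' _ _ j k; rewrite !inE => /orP [] /eqP -> /orP [] /eqP ->.
  + by rewrite eps_le_iff leqnn andbT.
  + by rewrite mixed_iff val_posI val_posI1 leqnSn andbT.
  + by rewrite mixed_false val_posI val_posI1 ltnn andbF.
  + by rewrite eps_le_iff leqnn andbT.
Qed.
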